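(* Let $n\ge 2$ be an integer, let $A$ be a $C^*$-algebra, and let $0<r<\frac{1}{2}$, $\theta\in[0,\infty)$ be real numbers. Suppose $f:A\to A$ satisfies $$\Big\|\mu f\Big(\frac{x+y}{2}\Big)+\mu f\Big(\frac{x-y}{2}\Big)-f(\mu x)+f(a^n)-\big(f(a)a^{n-1}+af(a)a^{n-2}+\cdots+a^{n-2}f(a)a+a^{n-1}f(a)\big)+f(w^* )-(f(w))^*\Big\|\le \theta(\|x\|^r\|y\|^r+\|a\|^{2r}+\|w\|^r)$$ for all $\mu\in\mathbb{T}$ and all $x,y,a,w\in A$. Then there exists a unique $*$-$n$-Jordan derivation $D:A\to A$ such that $$\|f(x)-D(x)\|\le \frac{3^r\theta}{2-2^r}\|x\|^{2r}$$ for all $x\in A$.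
   Context: $\mathbb{T}=\{\mu\in\mathbb{C}:|\mu|=1\}$. For an integer $n\ge 2$, an $n$-Jordan derivation on an algebra $A$ is a linear map $D:A\to A$ such that $D(a^n)=D(a)a^{n-1}+aD(a)a^{n-2}+\cdots+a^{n-2}D(a)a+a^{n-1}D(a)$ for all $a\in A$. On a $C^*$-algebra, a $*$-$n$-Jordan derivation is an $n$-Jordan derivation $D$ with $D(a^* )=(D(a))^*$ for all $a\in A$. *)

(* Defs.v *)
From Stdlib Require Import Reals.
From Coquelicot Require Export Coquelicot.
Export Complex.
Open Scope R_scope.

Section CStar.
Variable A : CompleteNormedModule C_AbsRing.

Record cstar_algebra (mul : A -> A -> A) (star : A -> A) : Prop := {
  cs_mul_assoc : forall x y z, mul x (mul y z) = mul (mul x y) z;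
  cs_mul_plus_l : forall x y z, mul x (plus y z) = plus (mul x y) (mul x z);
  cs_mul_plus_r : forall x y z, mul (plus x y) z = plus (mul x z) (mul y z);
  cs_mul_scal_l : forall (c : C) x y, mul (scal c x) y = scal c (mul x y);
  cs_mul_scal_r : forall (c : C) x y, mul x (scal c y) = scal c (mul x y);
  cs_norm_mul : forall x y, norm (mul x y) <= norm x * norm y;
  cs_star_invol : forall x, star (star x) = x;
  cs_star_plus : forall x y, star (plus x y) = plus (star x) (star y);
  cs_star_scal : forall (c : C) x, star (scal c x) = scal (Cconj c) (star x);
  cs_star_mul : forall x y, star (mul x y) = mul (star y) (star x);
  cs_cstar : forall x, norm (mul (star x) x) = norm x * norm x
}.

Fixpoint lmulk (mul : A -> A -> A) (a : A) (k : nat) (x : A) : A :=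
  match k with O => x | S k' => mul a (lmulk mul a k' x) end.
Fixpoint rmulk (mul : A -> A -> A) (a : A) (k : nat) (x : A) : A :=
  match k with O => x | S k' => mul (rmulk mul a k' x) a end.

(* a^n for n >= 1 *)
Definition apow (mul : A -> A -> A) (a : A) (n : nat) : A := lmulk mul a (n - 1) a.

Fixpoint sumA (f : nat -> A) (m : nat) : A :=
  match m with O => zero | S m' => plus (sumA f m') (f m') end.

(* D(a) a^{n-1} + a D(a) a^{n-2} + ... + a^{n-1} D(a) *)
Definition jordan_sum (mul : A -> A -> A) (n : nat) (d a : A) : A :=
  sumA (fun k => lmulk mul a k (rmulk mul a (n - 1 - k) d)) n.

Definition n_jordan_derivation (mul : A -> A -> A) (n : nat) (D : A -> A) : Prop :=
  (forall x y, D (plus x y) = plus (D x) (D y)) /\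
  (forall (c : C) x, D (scal c x) = scal c (D x)) /\
  (forall a, D (apow mul a n) = jordan_sum mul n (D a) a).

Definition star_n_jordan_derivation (mul : A -> A -> A) (star : A -> A) (n : nat)
    (D : A -> A) : Prop :=
  n_jordan_derivation mul n D /\ (forall a, D (star a) = star (D a)).
End CStar.

(* x^r for x >= 0, r > 0, with the convention 0^r = 0 *)
Definition rpow (x r : R) : R := if Req_EM_T x 0 then 0 else Rpower x r.

(* Main.v *)
Require Import Defs.
From Stdlib Require Import Reals Lra Lia.
From Coquelicot Require Import Coquelicot.
Import Complex.
Open Scope R_scope.
Notation CNM := (CompleteNormedModule C_AbsRing).

Definition pl {A : CNM} (x y : A) : A := plus x y.
Definition op {A : CNM} (x : A) : A := opp x.
Definition mi {A : CNM} (x y : A) : A := plus x (opp y).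
Definition sc {A : CNM} (c : C) (x : A) : A := scal c x.
Definition zr {A : CNM} : A := zero.
Definition nm {A : CNM} (x : A) : R := norm x.

Lemma k_mi_def (A : CNM) (x y : A) : mi x y = pl x (op y). Proof. reflexivity. Qed.
Lemma k_pcomm (A : CNM) (x y : A) : pl x y = pl y x. Proof. exact (plus_comm x y). Qed.
Lemma k_passoc (A : CNM) (x y z : A) : pl x (pl y z) = pl (pl x y) z.
Proof. exact (plus_assoc x y z). Qed.
Lemma k_pz_r (A : CNM) (x : A) : pl x zr = x. Proof. exact (plus_zero_r x). Qed.
Lemma k_pz_l (A : CNM) (x : A) : pl zr x = x. Proof. exact (plus_zero_l x). Qed.
Lemma k_opp_r (A : CNM) (x : A) : pl x (op x) = zr. Proof. exact (plus_opp_r x). Qed.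
Lemma k_opp_l (A : CNM) (x : A) : pl (op x) x = zr. Proof. exact (plus_opp_l x). Qed.
Lemma k_opp_plus (A : CNM) (x y : A) : op (pl x y) = pl (op x) (op y). Proof. exact (opp_plus x y). Qed.
Lemma k_mz (A : CNM) (x : A) : mi x zr = x. Proof. exact (minus_zero_r x). Qed.
Lemma k_mxx (A : CNM) (x : A) : mi x x = zr. Proof. exact (minus_eq_zero x). Qed.
Lemma k_sz_r (A : CNM) (c : C) : sc c (zr : A) = zr. Proof. exact (scal_zero_r c). Qed.
Lemma k_sz_l (A : CNM) (x : A) : sc (RtoC 0) x = zr. Proof. exact (scal_zero_l x). Qed.
Lemma k_s1 (A : CNM) (x : A) : sc (RtoC 1) x = x. Proof. exact (scal_one x). Qed.
Lemma k_assoc (A : CNM) (a b : C) (x : A) : sc a (sc b x) = sc (Cmult a b) x.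
Proof. exact (scal_assoc a b x). Qed.
Lemma k_RR (A : CNM) (a b : R) (x : A) : sc (RtoC a) (sc (RtoC b) x) = sc (RtoC (a*b)) x.
Proof. rewrite k_assoc, RtoC_mult. reflexivity. Qed.
Lemma k_comm (A : CNM) (a b : C) (x : A) : sc a (sc b x) = sc b (sc a x).
Proof. rewrite !k_assoc, Cmult_comm. reflexivity. Qed.
Lemma k_dl (A : CNM) (c : C) (x y : A) : sc c (pl x y) = pl (sc c x) (sc c y).
Proof. exact (scal_distr_l c x y). Qed.
Lemma k_dr (A : CNM) (a b : C) (x : A) : sc (Cplus a b) x = pl (sc a x) (sc b x).
Proof. exact (scal_distr_r a b x). Qed.
Lemma k_dm (A : CNM) (c : C) (x y : A) : sc c (mi x y) = mi (sc c x) (sc c y).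
Proof. exact (scal_minus_distr_l c x y). Qed.
Lemma k_sopp (A : CNM) (c : C) (x : A) : sc (Copp c) x = op (sc c x).
Proof. exact (scal_opp_l c x). Qed.
Lemma k_preg (A : CNM) (r x y : A) : pl x r = pl y r -> x = y. Proof. exact (plus_reg_r r x y). Qed.
Lemma k_mreg (A : CNM) (r x y : A) : mi x r = mi y r -> x = y. Proof. exact (plus_reg_r (opp r) x y). Qed.
Lemma k_mplus (A : CNM) (x y : A) : mi (pl x y) y = x.
Proof. rewrite k_mi_def, <- k_passoc, k_opp_r, k_pz_r. reflexivity. Qed.
Lemma k_plusm (A : CNM) (x y : A) : pl (mi x y) y = x.
Proof. rewrite k_mi_def, <- k_passoc, k_opp_l, k_pz_r. reflexivity. Qed.
Lemma k_norm_zero (A : CNM) : nm (zr : A) = 0. Proof. exact norm_zero. Qed.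
Lemma k_zero_of_norm (A : CNM) (v : A) : nm v <= 0 -> v = zr.
Proof. intros H. assert (H0 : norm v = 0) by (pose proof (norm_ge_0 v); unfold nm in H; lra).
  exact (norm_eq_zero v H0). Qed.
Lemma k_eq_of_minus (A : CNM) (x y : A) : mi x y = zr -> x = y.
Proof. intros H. rewrite <- (k_plusm A x y), H, k_pz_l. reflexivity. Qed.
Lemma k_norm_ge0 (A : CNM) (v : A) : 0 <= nm v. Proof. exact (norm_ge_0 v). Qed.
Lemma k_norm_scal (A : CNM) (c : C) (v : A) : nm (sc c v) <= Cmod c * nm v.
Proof. exact (norm_scal c v). Qed.

Lemma norm_scalR (A : CNM) (t : R) (v : A) :
  0 <= t -> nm (sc (RtoC t) v) = t * nm v.
Proof.
  intros Ht. destruct (Req_dec t 0) as [->|Hn].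
  - rewrite k_sz_l, k_norm_zero. ring.
  - apply Rle_antisym.
    + pose proof (k_norm_scal A (RtoC t) v) as H.
      rewrite Cmod_R, Rabs_pos_eq in H; auto.
    + pose proof (k_norm_scal A (RtoC (/t)) (sc (RtoC t) v)) as H.
      rewrite Cmod_R, Rabs_pos_eq in H by (apply Rlt_le, Rinv_0_lt_compat; lra).
      rewrite k_RR, Rinv_l, k_s1 in H by auto.
      apply (Rmult_le_compat_l t) in H; [|lra].
      rewrite <- Rmult_assoc, Rinv_r, Rmult_1_l in H; auto.
Qed.

Lemma rpow_ge0 x p : 0 <= rpow x p.
Proof. unfold rpow. destruct (Req_EM_T x 0). lra. apply Rlt_le, exp_pos. Qed.

Lemma rpow_0 p : rpow 0 p = 0.
Proof. unfold rpow. destruct (Req_EM_T 0 0); lra. Qed.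

Lemma rpow_scale t a p : 0 < t -> 0 <= a -> rpow (t*a) p = Rpower t p * rpow a p.
Proof.
  intros Ht Ha. unfold rpow.
  destruct (Req_EM_T a 0) as [->|Hn].
  - rewrite Rmult_0_r. destruct (Req_EM_T 0 0); lra.
  - destruct (Req_EM_T (t*a) 0) as [E|_].
    + apply Rmult_integral in E. lra.
    + rewrite Rpower_mult_distr; auto. lra.
Qed.

Lemma norm_scal_rpow (A : CNM) (t : R) (v : A) p :
  0 < t -> rpow (nm (sc (RtoC t) v)) p = Rpower t p * rpow (nm v) p.
Proof. intros Ht. rewrite norm_scalR by lra. apply rpow_scale; auto. apply k_norm_ge0. Qed.

Lemma zero_lemma (z C s : R) : 0 <= z -> 0 <= C -> s < 1 ->
  (forall T, exists t, T <= t /\ 1 <= t /\ t * z <= C * Rpower t s) -> z = 0.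
Proof.
  intros Hz HC Hs H. destruct (Req_dec z 0) as [|Hn]; auto. exfalso.
  assert (Hzp : 0 < z) by lra.
  destruct (H (Rpower (C/z+1) (/(1-s)))) as [t [H1 [H2 H3]]].
  assert (Hp : 0 < Rpower (C/z+1) (/(1-s))) by apply exp_pos.
  assert (HP : C/z + 1 <= Rpower t (1-s)).
  { replace (C/z+1) with (Rpower (Rpower (C/z+1) (/(1-s))) (1-s)).
    - apply Rle_Rpower_l; lra.
    - rewrite Rpower_mult, Rinv_l, Rpower_1; try lra.
      assert (0 <= C/z) by (apply Rdiv_le_0_compat; lra). lra. }
  assert (Et : t = Rpower t (1-s) * Rpower t s).
  { rewrite <- Rpower_plus. replace (1-s+s) with 1 by ring. rewrite Rpower_1; lra. }
  assert (H4 : Rpower t (1-s) * Rpower t s * z <= C * Rpower t s) by (rewrite <- Et; exact H3).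
  assert (HQ : 0 < Rpower t s) by apply exp_pos.
  assert (Rpower t (1-s) * z <= C).
  { apply (Rmult_le_reg_r (Rpower t s)); auto. nra. }
  assert ((C/z+1)*z <= C) by nra.
  replace ((C/z+1)*z) with (C + z) in H5 by (field; lra). lra.
Qed.

Lemma INR_le_pow2 k : INR k <= 2 ^ k.
Proof. induction k. simpl; lra. rewrite S_INR. simpl.
  assert (1 <= 2^k) by (apply pow_R1_Rle; lra). lra. Qed.

Lemma pow2_unb T : exists k, T <= 2 ^ k /\ 1 <= 2 ^ k.
Proof. destruct (INR_unbounded T) as [k Hk]. exists k. split.
  pose proof (INR_le_pow2 k). lra. apply pow_R1_Rle; lra. Qed.

Lemma mul_sc_r (A : CNM) mul star (cs : cstar_algebra A mul star) c (x y : A) :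
  mul x (sc c y) = sc c (mul x y).
Proof. exact (cs_mul_scal_r _ _ _ cs c x y). Qed.
Lemma mul_sc_l (A : CNM) mul star (cs : cstar_algebra A mul star) c (x y : A) :
  mul (sc c x) y = sc c (mul x y).
Proof. exact (cs_mul_scal_l _ _ _ cs c x y). Qed.
Lemma mul_zr_r (A : CNM) mul star (cs : cstar_algebra A mul star) (x : A) : mul x zr = zr.
Proof. transitivity (mul x (sc (RtoC 0) zr)). now rewrite k_sz_l.
  rewrite (mul_sc_r A mul star cs). apply k_sz_l. Qed.
Lemma mul_zr_l (A : CNM) mul star (cs : cstar_algebra A mul star) (x : A) : mul zr x = zr.
Proof. transitivity (mul (sc (RtoC 0) zr) x). now rewrite k_sz_l.
  rewrite (mul_sc_l A mul star cs). apply k_sz_l. Qed.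
Lemma star_scR (A : CNM) mul star (cs : cstar_algebra A mul star) t (x : A) :
  star (sc (RtoC t) x) = sc (RtoC t) (star x).
Proof. transitivity (sc (Cconj (RtoC t)) (star x)). exact (cs_star_scal _ _ _ cs (RtoC t) x).
  f_equal. unfold Cconj, RtoC; simpl. f_equal. ring. Qed.
Lemma star_zr (A : CNM) mul star (cs : cstar_algebra A mul star) : star (zr : A) = zr.
Proof. transitivity (star (sc (RtoC 0) (zr:A))). now rewrite k_sz_l.
  rewrite (star_scR A mul star cs). apply k_sz_l. Qed.

Lemma lmulk_sc (A : CNM) mul star (cs : cstar_algebra A mul star) a k c (y : A) :
  lmulk A mul a k (sc c y) = sc c (lmulk A mul a k y).
Proof. induction k; simpl. reflexivity. rewrite IHk. apply (mul_sc_r A mul star cs). Qed.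
Lemma rmulk_sc (A : CNM) mul star (cs : cstar_algebra A mul star) a k c (y : A) :
  rmulk A mul a k (sc c y) = sc c (rmulk A mul a k y).
Proof. induction k; simpl. reflexivity. rewrite IHk. apply (mul_sc_l A mul star cs). Qed.
Lemma lmulk_sa (A : CNM) mul star (cs : cstar_algebra A mul star) (a : A) k t y :
  lmulk A mul (sc (RtoC t) a) k y = sc (RtoC (t^k)) (lmulk A mul a k y).
Proof. induction k; simpl. symmetry; apply k_s1.
  rewrite IHk, (mul_sc_l A mul star cs), (mul_sc_r A mul star cs), k_RR. reflexivity. Qed.
Lemma rmulk_sa (A : CNM) mul star (cs : cstar_algebra A mul star) (a : A) k t y :
  rmulk A mul (sc (RtoC t) a) k y = sc (RtoC (t^k)) (rmulk A mul a k y).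
Proof. induction k; simpl. symmetry; apply k_s1.
  rewrite IHk, (mul_sc_l A mul star cs), (mul_sc_r A mul star cs), k_RR, Rmult_comm. reflexivity. Qed.
Lemma lmulk_zr (A : CNM) mul star (cs : cstar_algebra A mul star) (a : A) k :
  lmulk A mul a k zr = zr.
Proof. induction k; simpl. reflexivity. rewrite IHk. apply (mul_zr_r A mul star cs). Qed.
Lemma rmulk_zr (A : CNM) mul star (cs : cstar_algebra A mul star) (a : A) k :
  rmulk A mul a k zr = zr.
Proof. induction k; simpl. reflexivity. rewrite IHk. apply (mul_zr_l A mul star cs). Qed.

Lemma sumA_S (A : CNM) (g : nat -> A) m : sumA A g (S m) = pl (sumA A g m) (g m).
Proof. reflexivity. Qed.
Lemma sumA_0 (A : CNM) (g : nat -> A) : sumA A g 0 = zr.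
Proof. reflexivity. Qed.
Lemma sumA_ext (A : CNM) (g h : nat -> A) m : (forall k, (k < m)%nat -> g k = h k) ->
  sumA A g m = sumA A h m.
Proof. induction m; intros H. reflexivity. rewrite !sumA_S, IHm, H. reflexivity. lia.
  intros; apply H; lia. Qed.
Lemma sumA_sc (A : CNM) (g : nat -> A) c m : sumA A (fun k => sc c (g k)) m = sc c (sumA A g m).
Proof. induction m. rewrite !sumA_0, k_sz_r. reflexivity. rewrite !sumA_S, IHm, k_dl. reflexivity. Qed.
Lemma sumA_zr (A : CNM) m : sumA A (fun _ => zr) m = zr.
Proof. induction m. reflexivity. rewrite sumA_S, IHm, k_pz_r. reflexivity. Qed.

Lemma apow_zr (A : CNM) mul star (cs : cstar_algebra A mul star) n : apow A mul zr n = zr.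
Proof. unfold apow. apply (lmulk_zr A mul star cs). Qed.
Lemma jordan_zr (A : CNM) mul star (cs : cstar_algebra A mul star) n (a : A) :
  jordan_sum A mul n zr a = zr.
Proof. unfold jordan_sum. transitivity (sumA A (fun _ => zr) n); [|apply sumA_zr]. apply sumA_ext. intros k _.
  rewrite (rmulk_zr A mul star cs). apply (lmulk_zr A mul star cs). Qed.
Lemma apow_sc (A : CNM) mul star (cs : cstar_algebra A mul star) n t (a : A) : (1 <= n)%nat ->
  apow A mul (sc (RtoC t) a) n = sc (RtoC (t^n)) (apow A mul a n).
Proof. intros Hn. unfold apow. rewrite (lmulk_sa A mul star cs), (lmulk_sc A mul star cs), k_RR.
  f_equal. f_equal. replace (t^n) with (t^(S (n-1))) by (f_equal; lia). simpl. ring. Qed.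
Lemma jordan_sc (A : CNM) mul star (cs : cstar_algebra A mul star) n t (d a : A) :
  jordan_sum A mul n (sc (RtoC t) d) (sc (RtoC t) a) = sc (RtoC (t^n)) (jordan_sum A mul n d a).
Proof. unfold jordan_sum. rewrite <- sumA_sc. apply sumA_ext. intros k Hk.
  rewrite (rmulk_sa A mul star cs), (rmulk_sc A mul star cs), (lmulk_sa A mul star cs),
    (lmulk_sc A mul star cs), (lmulk_sc A mul star cs), !k_RR.
  f_equal. f_equal. replace (t^n) with (t^(S (k + (n-1-k)))) by (f_equal; lia). simpl. rewrite pow_add. ring. Qed.

Lemma k_oppopp (A : CNM) (x : A) : op (op x) = x. Proof. exact (opp_opp x). Qed.
Lemma k_double2 (A : CNM) (x : A) : pl x x = sc (RtoC 2) x.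
Proof. rewrite <- (k_s1 A x) at 1 2. rewrite <- k_dr. f_equal.
  unfold Cplus, RtoC; simpl. f_equal; ring. Qed.
Lemma k_mplus2 (A : CNM) (x y z : A) : mi (pl x y) (pl x z) = mi y z.
Proof. rewrite !k_mi_def, k_opp_plus. rewrite (k_pcomm _ x y).
  rewrite <- (k_passoc _ y x), (k_passoc _ x (op x)), k_opp_r, k_pz_l. reflexivity. Qed.
Lemma alg1 (A : CNM) (u v : A) : pl (pl u v) (mi u v) = pl u u.
Proof. rewrite k_mi_def, (k_pcomm _ u (op v)), k_passoc, <- (k_passoc _ u v (op v)), k_opp_r, k_pz_r.
  reflexivity. Qed.
Lemma alg2 (A : CNM) (u v : A) : mi (pl u v) (mi u v) = pl v v.
Proof. rewrite (k_mi_def _ u v), k_mplus2, k_mi_def, k_oppopp. reflexivity. Qed.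
Lemma k_sc_inj (A : CNM) (a b : C) (v : A) : sc a v = sc b v -> a <> b -> v = zr.
Proof. intros E Hne.
  assert (Hd : Cplus a (Copp b) <> RtoC 0).
  { intro E2. apply Hne. destruct a as [a1 a2], b as [b1 b2]. unfold Cplus, Copp, RtoC in E2.
    simpl in E2. injection E2. intros. f_equal; lra. }
  assert (Z : sc (Cplus a (Copp b)) v = zr).
  { rewrite k_dr, k_sopp, E, <- k_mi_def. apply k_mxx. }
  rewrite <- (k_s1 A v), <- (Cinv_l _ Hd), <- k_assoc, Z. apply k_sz_r. Qed.

Theorem corollary2p8 (n : nat) (A : CompleteNormedModule C_AbsRing)
  (mul : A -> A -> A) (star : A -> A) (r theta : R) (f : A -> A) :
  (2 <= n)%nat ->
  cstar_algebra A mul star ->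
  0 < r -> r < /2 -> 0 <= theta ->
  (forall (mu : C) (x y a w : A), Cmod mu = 1 ->
     norm (plus (plus
       (minus (plus (scal mu (f (scal (RtoC (/2)) (plus x y))))
                    (scal mu (f (scal (RtoC (/2)) (minus x y)))))
              (f (scal mu x)))
       (minus (f (apow A mul a n)) (jordan_sum A mul n (f a) a)))
       (minus (f (star w)) (star (f w))))
     <= theta * (rpow (norm x) r * rpow (norm y) r + rpow (norm a) (2 * r)
                 + rpow (norm w) r)) ->
  exists D : A -> A,
    star_n_jordan_derivation A mul star n D /\
    (forall x, norm (minus (f x) (D x))
               <= Rpower 3 r * theta / (2 - Rpower 2 r) * rpow (norm x) (2 * r)) /\
    (forall D' : A -> A,
       star_n_jordan_derivation A mul star n D' ->
       (forall x, norm (minus (f x) (D' x))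
                  <= Rpower 3 r * theta / (2 - Rpower 2 r) * rpow (norm x) (2 * r)) ->
       forall x, D' x = D x).
Proof.
  intros Hn cs Hr0 Hr1 Hth H.
  assert (Hc : forall (mu : C) (x y a w : A), Cmod mu = 1 ->
     nm (pl (pl
       (mi (pl (sc mu (f (sc (RtoC (/2)) (pl x y))))
                    (sc mu (f (sc (RtoC (/2)) (mi x y)))))
              (f (sc mu x)))
       (mi (f (apow A mul a n)) (jordan_sum A mul n (f a) a)))
       (mi (f (star w)) (star (f w))))
     <= theta * (rpow (nm x) r * rpow (nm y) r + rpow (nm a) (2 * r)
                 + rpow (nm w) r)) by exact H.
  clear H.
  assert (Cm1 : Cmod (RtoC 1) = 1) by (rewrite Cmod_R; apply Rabs_pos_eq; lra).
  assert (F0 : f zr = zr).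
  { pose proof (Hc (RtoC 1) zr zr zr zr Cm1) as H1.
    assert (Cmm : Cmod (RtoC (-1)) = 1) by (rewrite Cmod_R; unfold Rabs; destruct Rcase_abs; lra).
    pose proof (Hc (RtoC (-1)) zr zr zr zr Cmm) as H2.
    rewrite k_pz_r, k_mxx, !k_sz_r, !k_norm_zero, !rpow_0 in H1, H2.
    assert (H1' : theta * (0*0+0+0) = 0) by ring. rewrite H1' in H1, H2.
    apply k_zero_of_norm in H1. apply k_zero_of_norm in H2.
    pose proof (eq_trans H1 (eq_sym H2)) as H3. clear H1 H2. rename H3 into H1.
    apply k_preg, k_preg, k_mreg in H1.
    rewrite k_s1, !k_double2, k_RR in H1. apply (k_sc_inj A _ _ _ H1).
    intro E. injection E. lra. }
  assert (J0 : forall k, jordan_sum A mul k zr zr = zr) by (intro; apply (jordan_zr A mul star cs)).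
  assert (P0 : apow A mul zr n = zr) by apply (apow_zr A mul star cs).
  assert (S0 : star zr = zr) by apply (star_zr A mul star cs).
  assert (I1 : forall mu x y, Cmod mu = 1 ->
    nm (mi (pl (sc mu (f (sc (RtoC (/2)) (pl x y)))) (sc mu (f (sc (RtoC (/2)) (mi x y)))))
           (f (sc mu x))) <= theta * (rpow (nm x) r * rpow (nm y) r)).
  { intros mu x y Hmu. pose proof (Hc mu x y zr zr Hmu) as H1.
    rewrite P0, S0, F0, J0, S0, !k_mxx, !k_pz_r, k_norm_zero, !rpow_0 in H1.
    eapply Rle_trans; [exact H1|]. right; ring. }
  assert (I2 : forall a, nm (mi (f (apow A mul a n)) (jordan_sum A mul n (f a) a))
                <= theta * rpow (nm a) (2*r)).
  { intros a. pose proof (Hc (RtoC 1) zr zr a zr Cm1) as H1.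
    do 4 rewrite ?k_pz_r, ?k_pz_l, ?k_mxx, ?k_sz_r, ?F0, ?P0, ?S0, ?J0, ?k_mz in H1.
    rewrite ?k_s1, ?k_norm_zero, !rpow_0 in H1.
    eapply Rle_trans; [exact H1|]. right; ring. }
  assert (I3 : forall w, nm (mi (f (star w)) (star (f w))) <= theta * rpow (nm w) r).
  { intros w. pose proof (Hc (RtoC 1) zr zr zr w Cm1) as H1.
    do 4 rewrite ?k_pz_r, ?k_pz_l, ?k_mxx, ?k_sz_r, ?F0, ?P0, ?S0, ?J0, ?k_mz in H1.
    rewrite ?k_s1, ?k_norm_zero, !rpow_0 in H1.
    eapply Rle_trans; [exact H1|]. right; ring. }
  assert (Fh : forall mu x, Cmod mu = 1 ->
     f (sc mu x) = pl (sc mu (f (sc (RtoC (/2)) x))) (sc mu (f (sc (RtoC (/2)) x)))).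
  { intros mu x Hmu. pose proof (I1 mu x zr Hmu) as H1.
    rewrite k_pz_r, k_mz, k_norm_zero, rpow_0, Rmult_0_r, Rmult_0_r in H1.
    symmetry. apply k_eq_of_minus, k_zero_of_norm. exact H1. }
  assert (h2 : forall x : A, sc (RtoC (/2)) (sc (RtoC 2) x) = x).
  { intros x. rewrite k_RR, Rinv_l, k_s1 by lra. reflexivity. }
  assert (h2' : forall x : A, sc (RtoC 2) (sc (RtoC (/2)) x) = x).
  { intros x. rewrite k_RR, Rinv_r, k_s1 by lra. reflexivity. }
  assert (F2 : forall x, f (sc (RtoC 2) x) = pl (f x) (f x)).
  { intros x. rewrite <- (k_s1 A (sc (RtoC 2) x)) at 1. rewrite (Fh (RtoC 1) _ Cm1), h2, !k_s1. reflexivity. }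
  assert (Fmu : forall mu x, Cmod mu = 1 -> f (sc mu x) = sc mu (f x)).
  { intros mu x Hmu. rewrite (Fh mu x Hmu), <- k_dl, <- F2, h2'. reflexivity. }
  assert (Fp2 : forall k x, f (sc (RtoC (2^k)) x) = sc (RtoC (2^k)) (f x)).
  { induction k; intros x.
    - change (2^0) with 1. rewrite !k_s1. reflexivity.
    - change (2^(S k)) with (2 * 2^k). rewrite <- !k_RR, F2, IHk, k_double2. reflexivity. }
  assert (Qz : forall x y : A,
     mi (pl (f (sc (RtoC (/2)) (pl x y))) (f (sc (RtoC (/2)) (mi x y)))) (f x) = zr).
  { intros x y. apply k_zero_of_norm. right.
    apply (zero_lemma _ (theta * (rpow (nm x) r * rpow (nm y) r)) (2*r)).
    - apply k_norm_ge0.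
    - apply Rmult_le_pos; auto. apply Rmult_le_pos; apply rpow_ge0.
    - lra.
    - intros T. destruct (pow2_unb T) as [k [Hk1 Hk2]]. exists (2^k). split; [lra|split; [lra|]].
      pose proof (I1 (RtoC 1) (sc (RtoC (2^k)) x) (sc (RtoC (2^k)) y) Cm1) as H1.
      rewrite !k_s1, <- k_dl, <- k_dm, !(k_comm A (RtoC (/2)) (RtoC (2^k))), !Fp2, <- k_dl, <- k_dm in H1.
      rewrite norm_scalR in H1 by lra. rewrite !norm_scal_rpow in H1 by lra.
      replace (Rpower (2^k) (2*r)) with (Rpower (2^k) r * Rpower (2^k) r)
        by (rewrite <- Rpower_plus; f_equal; ring).
      eapply Rle_trans; [exact H1|]. right; ring. }
  assert (Fadd : forall u v : A, f (pl u v) = pl (f u) (f v)).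
  { intros u v. pose proof (Qz (pl u v) (mi u v)) as H1.
    rewrite alg1, alg2, !k_double2, !h2 in H1. symmetry. apply k_eq_of_minus. exact H1. }
  assert (Fs : forall s x, -2 <= s <= 2 -> f (sc (RtoC s) x) = sc (RtoC s) (f x)).
  { intros s x Hs.
    set (mu := (s/2, sqrt (1 - (s/2)^2)) : C).
    assert (Hq : 0 <= 1 - (s/2)^2) by nra.
    assert (Hmu : Cmod mu = 1).
    { unfold Cmod, mu. cbn [fst snd]. rewrite pow2_sqrt by exact Hq.
      transitivity (sqrt 1); [f_equal; ring | apply sqrt_1]. }
    assert (Hnu : Cmod (Cconj mu) = 1) by (rewrite Cmod_conj; exact Hmu).
    assert (Es : RtoC s = Cplus mu (Cconj mu)).
    { unfold mu, Cplus, Cconj, RtoC; simpl. f_equal; field. }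
    rewrite Es, !k_dr, Fadd, (Fmu _ _ Hmu), (Fmu _ _ Hnu). reflexivity. }
  assert (Fr : forall t x, f (sc (RtoC t) x) = sc (RtoC t) (f x)).
  { intros t x. destruct (pow2_unb (Rabs t / 2)) as [k [Hk1 Hk2]].
    set (p := 2^k) in *.
    assert (Hb : -2 <= t/p <= 2).
    { pose proof (Rle_abs t). pose proof (Rle_abs (-t)). rewrite Rabs_Ropp in H0.
      split; [apply (Rmult_le_reg_r p); [lra|] | apply (Rmult_le_reg_r p); [lra|]];
        unfold Rdiv; rewrite Rmult_assoc, Rinv_l; lra. }
    replace t with (p * (t/p)) by (field; lra).
    rewrite <- !k_RR. unfold p. rewrite Fp2, Fs by (fold p; exact Hb). reflexivity. }
  assert (Fc : forall c x, f (sc c x) = sc c (f x)).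
  { intros c x. destruct (Req_dec (Cmod c) 0) as [Hz|Hz].
    - apply Cmod_eq_0 in Hz. subst c. rewrite !k_sz_l, F0. reflexivity.
    - set (m := Cmod c) in *. assert (Hm : 0 < m) by (pose proof (Cmod_ge_0 c); unfold m in *; lra).
      set (u := Cmult c (RtoC (/m))).
      assert (Hu : Cmod u = 1).
      { unfold u. rewrite Cmod_mult, Cmod_R, Rabs_pos_eq; fold m.
        field; lra. apply Rlt_le, Rinv_0_lt_compat; lra. }
      assert (Ec : c = Cmult (RtoC m) u).
      { unfold u. destruct c as [c1 c2]. unfold Cmult, RtoC; simpl. f_equal; field; lra. }
      rewrite Ec, <- !k_assoc, Fr, Fmu by exact Hu. reflexivity. }
  assert (Fj : forall a, f (apow A mul a n) = jordan_sum A mul n (f a) a).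
  { intros a. apply k_eq_of_minus, k_zero_of_norm. right.
    apply (zero_lemma _ (theta * rpow (nm a) (2*r)) (2*r)).
    - apply k_norm_ge0.
    - apply Rmult_le_pos; auto. apply rpow_ge0.
    - lra.
    - intros T. exists (Rmax 1 T). set (t := Rmax 1 T).
      assert (Ht : 1 <= t) by apply Rmax_l. split; [apply Rmax_r|split; [exact Ht|]].
      pose proof (I2 (sc (RtoC t) a)) as H1.
      rewrite (apow_sc A mul star cs) in H1 by lia.
      rewrite !Fr, (jordan_sc A mul star cs), <- k_dm in H1.
      rewrite norm_scalR in H1 by (apply pow_le; lra). rewrite norm_scal_rpow in H1 by lra.
      assert (Htn : t <= t^n) by (rewrite <- (pow_1 t) at 1; apply Rle_pow; lia || lra).
      pose proof (k_norm_ge0 A (mi (f (apow A mul a n)) (jordan_sum A mul n (f a) a))).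
      assert (0 <= rpow (nm a) (2*r)) by apply rpow_ge0.
      assert (0 < Rpower t (2*r)) by apply exp_pos. nra. }
  assert (Fst : forall w, f (star w) = star (f w)).
  { intros w. apply k_eq_of_minus, k_zero_of_norm. right.
    apply (zero_lemma _ (theta * rpow (nm w) r) r).
    - apply k_norm_ge0.
    - apply Rmult_le_pos; auto. apply rpow_ge0.
    - lra.
    - intros T. exists (Rmax 1 T). set (t := Rmax 1 T).
      assert (Ht : 1 <= t) by apply Rmax_l. split; [apply Rmax_r|split; [exact Ht|]].
      pose proof (I3 (sc (RtoC t) w)) as H1.
      rewrite (star_scR A mul star cs), !Fr, (star_scR A mul star cs), <- k_dm in H1.
      rewrite norm_scalR in H1 by lra. rewrite norm_scal_rpow in H1 by lra.
      eapply Rle_trans; [exact H1|]. right; ring. }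
  set (K := Rpower 3 r * theta / (2 - Rpower 2 r)).
  assert (HK : 0 <= K).
  { unfold K. assert (Rpower 2 r < 2).
    { rewrite <- (Rpower_1 2) at 2 by lra. apply Rpower_lt; lra. }
    assert (0 < Rpower 3 r) by apply exp_pos.
    apply Rmult_le_pos; [apply Rmult_le_pos; lra|]. apply Rlt_le, Rinv_0_lt_compat; lra. }
  exists f. split; [|split].
  - split; [split; [|split]|].
    + intros x y. exact (Fadd x y).
    + intros c x. exact (Fc c x).
    + intros a. exact (Fj a).
    + intros w. exact (Fst w).
  - intros x. change (nm (mi (f x) (f x)) <= K * rpow (nm x) (2 * r)).
    rewrite k_mxx, k_norm_zero. apply Rmult_le_pos; auto. apply rpow_ge0.
  - intros D' [[Hadd [Hsc Hjj]] Hstt] Hb x.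
    assert (Hsc' : forall c x, D' (sc c x) = sc c (D' x)) by (intros; exact (Hsc c x0)).
    assert (Hb' : forall x, nm (mi (f x) (D' x)) <= K * rpow (nm x) (2*r)) by (intros; exact (Hb x0)).
    symmetry. apply k_eq_of_minus, k_zero_of_norm. right.
    apply (zero_lemma _ (K * rpow (nm x) (2*r)) (2*r)).
    + apply k_norm_ge0.
    + apply Rmult_le_pos; auto. apply rpow_ge0.
    + lra.
    + intros T. exists (Rmax 1 T). set (t := Rmax 1 T).
      assert (Ht : 1 <= t) by apply Rmax_l. split; [apply Rmax_r|split; [exact Ht|]].
      pose proof (Hb' (sc (RtoC t) x)) as H1.
      rewrite Fr, Hsc', <- k_dm in H1.
      rewrite norm_scalR in H1 by lra. rewrite norm_scal_rpow in H1 by lra.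
      eapply Rle_trans; [exact H1|]. right; ring.
Qed.
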